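(* Let $a_{4,0},a_{2,2},a_{0,4}\geqslant0$ with $a_{4,0}+a_{2,2}>0$, $a_{2,2}+a_{0,4}>0$, let $t\in\mathbb{R}$ and $W_t(x,y)=e^{-(a_{4,0}x^4+a_{2,2}x^2y^2+a_{0,4}y^4)+t(x^2+y^2)}$. Let $\{\mathbb{Q}_n(t)\}_{n\geqslant0}$ be the monic orthogonal polynomial system for $W_t$, with $H_n(t)$ and $E_{n,i}(t)$ as in the context. Then for $n\geqslant0$, $$\dot H_n(t)=V_{n+1}(t)H_n(t),$$ where $V_{n+1}(t)=L_{n,1}E_{n+1,1}(t)+L_{n,2}E_{n+1,2}(t)+E_{n,1}(t)L_{n-1,1}+E_{n,2}(t)L_{n-1,2}$ and the dot denotes derivative with respect to $t$.
   Context: $\mathbb{X}_n=(x^n,x^{n-1}y,\dots,y^n)^T$. $L_{n,1}=(I_{n+1}\,|\,0)$ and $L_{n,2}=(0\,|\,I_{n+1})$ are $(n+1)\times(n+2)$ matrices. Inner product $(f,g)_t=\iint_{\mathbb{R}^2}fgW_t\,dx\,dy$, applied entrywise to vectors. The monic orthogonal polynomial system is the sequence of column vectors $\mathbb{Q}_n(t)=\mathbb{X}_n+(\text{vector of polynomials of total degree}<n)$, coefficients depending on $t$, with $(\mathbb{Q}_n(t),\mathbb{Q}_m(t)^T)_t=0$ for $m\neq n$ and $H_n(t):=(\mathbb{Q}_n(t),\mathbb{Q}_n(t)^T)_t$ symmetric positive definite. It satisfies, for $n\geqslant0$, $x\mathbb{Q}_n(t)=L_{n,1}\mathbb{Q}_{n+1}(t)+E_{n,1}(t)\mathbb{Q}_{n-1}(t)$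 and $y\mathbb{Q}_n(t)=L_{n,2}\mathbb{Q}_{n+1}(t)+E_{n,2}(t)\mathbb{Q}_{n-1}(t)$, with $\mathbb{Q}_{-1}=0$, $\mathbb{Q}_0=1$, $E_{n,i}(t)$ of size $(n+1)\times n$ (the terms with $E_{0,i}$ are zero). *)

(* Defs.v *)
From HB Require Import structures.
From mathcomp Require Import all_boot all_order all_algebra.
From mathcomp Require Import all_classical all_reals all_analysis.
Set Implicit Arguments. Unset Strict Implicit. Unset Printing Implicit Defensive.
Import Order.TTheory GRing.Theory Num.Theory.
Local Open Scope ring_scope.

Section Defs.
Variable R : realType.

Definition mu2 := ((@lebesgue_measure R) \x (@lebesgue_measure R))%E.

Definition Wt (a40 a22 a04 t : R) (x y : R) : R :=
  expR (- (a40 * x ^+ 4 + a22 * x ^+ 2 * y ^+ 2 + a04 * y ^+ 4)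
        + t * (x ^+ 2 + y ^+ 2)).

Definition ip (w f g : R -> R -> R) : R :=
  Rintegral mu2 setT (fun z : R * R => f z.1 z.2 * g z.1 z.2 * w z.1 z.2).
Definition ip_ok (w f g : R -> R -> R) : Prop :=
  mu2.-integrable setT (fun z : R * R => (f z.1 z.2 * g z.1 z.2 * w z.1 z.2)%:E).

Definition gram (m n : nat) (w : R -> R -> R)
    (u : R -> R -> 'cV[R]_m) (v : R -> R -> 'cV[R]_n) : 'M[R]_(m, n) :=
  \matrix_(i, j) ip w (fun x y => u x y i 0) (fun x y => v x y j 0).

(* q = X_n + (vector of polynomials of total degree < n) *)
Definition monic_vec (n : nat) (q : R -> R -> 'cV[R]_n.+1) : Prop :=
  exists c : 'I_n.+1 -> nat -> nat -> R, forall (x y : R) (k : 'I_n.+1),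
    q x y k 0 = x ^+ (n - k) * y ^+ k
                + \sum_(i < n) \sum_(j < n - i) c k i j * x ^+ i * y ^+ j.

Definition posdef (n : nat) (H : 'M[R]_n) : Prop :=
  forall v : 'cV[R]_n, v != 0 -> 0 < (v^T *m H *m v) 0 0.

Definition is_MOPS (w : R -> R -> R) (Q : forall n, R -> R -> 'cV[R]_n.+1) : Prop :=
  [/\ (forall n, monic_vec (Q n)),
      (forall m n (i : 'I_m.+1) (j : 'I_n.+1),
          ip_ok w (fun x y => Q m x y i 0) (fun x y => Q n x y j 0)),
      (forall m n, m <> n -> gram w (Q m) (Q n) = 0) &
      (forall n, (gram w (Q n) (Q n))^T = gram w (Q n) (Q n)
                 /\ posdef (gram w (Q n) (Q n)))].

(* Q_{n-1}, with Q_{-1} = 0 *)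
Definition Qprev (Q : forall n, R -> R -> 'cV[R]_n.+1) (n : nat) (x y : R)
  : 'cV[R]_n :=
  match n return 'cV[R]_n with 0 => 0 | m.+1 => Q m x y end.

(* L1 m = (I_m | 0), L2 m = (0 | I_m), both m x (m+1);
   so L_{n,i} = Li n.+1 and L_{n-1,i} = Li n *)
Definition L1 (m : nat) : 'M[R]_(m, m.+1) :=
  \matrix_(i, j) (nat_of_ord j == nat_of_ord i)%:R.
Definition L2 (m : nat) : 'M[R]_(m, m.+1) :=
  \matrix_(i, j) (nat_of_ord j == (nat_of_ord i).+1)%:R.

End Defs.

Arguments L1 {R} m.
Arguments L2 {R} m.
Arguments Qprev {R} Q n x y.
Arguments gram {R m n} w u v.
Arguments Wt {R} a40 a22 a04 t x y.
Arguments is_MOPS {R} w Q.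

(* Main.v *)
Require Import Defs.
From HB Require Import structures.
From mathcomp Require Import all_boot all_order all_algebra.
From mathcomp Require Import all_classical all_reals all_analysis.
From mathcomp Require Import ring lra zify.
Import Order.TTheory GRing.Theory Num.Theory.
Import numFieldNormedType.Exports.
Set Implicit Arguments. Unset Strict Implicit. Unset Printing Implicit Defensive.
Local Open Scope classical_set_scope.
Local Open Scope ring_scope.

Section SpanTh.
Variable R : realType.
Variable Q : forall n, R -> R -> 'cV[R]_n.+1.

Inductive S (N : nat) : (R -> R -> R) -> Prop :=
| S0 : S N (fun _ _ => 0)
| SQ m (k : 'I_m.+1) : (m < N)%N -> S N (fun x y => Q m x y k 0)
| Sadd f g : S N f -> S N g -> S N (fun x y => f x y + g x y)
| Sscale c f : S N f -> S N (fun x y => c * f x y).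

Lemma S_ext N f g : S N f -> (forall x y, f x y = g x y) -> S N g.
Proof. by move=> + fg; have -> : g = f by apply/funext=> x; apply/funext=> y. Qed.

Lemma S_sub N f g : S N f -> S N g -> S N (fun x y => f x y - g x y).
Proof.
move=> hf hg; apply: (S_ext (Sadd hf (Sscale (-1) hg))) => x y.
by rewrite mulN1r.
Qed.

Lemma S_sum N (T : Type) (r : seq T) (F : T -> R -> R -> R) :
  (forall i, S N (F i)) -> S N (fun x y => \sum_(i <- r) F i x y).
Proof.
move=> hF; elim: r => [|a r IH].
  by apply: (S_ext (S0 N)) => x y; rewrite big_nil.
by apply: (S_ext (Sadd (hF a) IH)) => x y; rewrite big_cons.
Qed.

Lemma S_mono N M f : (N <= M)%N -> S N f -> S M f.
Proof.
move=> NM; elim => [|m k hm|f1 g1 _ h1 _ h2|c f1 _ h1].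
- exact: S0.
- by apply: SQ; apply: leq_trans NM.
- exact: Sadd.
- exact: Sscale.
Qed.

Lemma S_mul (phi : R -> R -> R) (L : forall m, 'M[R]_(m, m.+1))
  (E : forall n, 'M[R]_(n.+1, n)) :
  (forall n x y, phi x y *: Q n x y = L n.+1 *m Q n.+1 x y + E n *m Qprev Q n x y) ->
  forall N f, S N f -> S N.+1 (fun x y => phi x y * f x y).
Proof.
move=> hrec N f; elim => [|m k hm|f1 g1 _ h1 _ h2|c f1 _ h1].
- by apply: (S_ext (S0 _)) => x y; rewrite mulr0.
- apply: (@S_ext _ (fun x y => \sum_j L m.+1 k j * Q m.+1 x y j 0
                   + \sum_j E m k j * Qprev Q m x y j 0)); last first.
    by move=> x y; move: (hrec m x y) => /matrixP/(_ k 0); rewrite !mxE => ->.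
  apply: Sadd.
    by apply: S_sum => a; apply: Sscale; apply: SQ.
  case: m k hm => [|m'] k hm /=.
    by apply: (S_ext (S0 _)) => x y; rewrite big_ord0.
  apply: S_sum => b; apply: Sscale; apply: SQ.
  by rewrite ltnS ltnW // ltnW.
- by apply: (S_ext (Sadd h1 h2)) => x y; rewrite mulrDr.
- by apply: (S_ext (Sscale c h1)) => x y; rewrite mulrCA.
Qed.


Lemma Q0_one : monic_vec (Q 0) -> forall x y (k : 'I_1), Q 0 x y k 0 = 1.
Proof.
rewrite /monic_vec => -[c hc] x y k; rewrite hc big_ord0 addr0.
have -> : nat_of_ord k = 0%N by case: k => -[].
by rewrite !expr0 mulr1.
Qed.

Variables (E1 E2 : forall n, 'M[R]_(n.+1, n)).
Hypothesis hx : forall n x y, x *: Q n x y = L1 n.+1 *m Q n.+1 x y + E1 n *m Qprev Q n x y.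
Hypothesis hy : forall n x y, y *: Q n x y = L2 n.+1 *m Q n.+1 x y + E2 n *m Qprev Q n x y.
Hypothesis hQ0 : monic_vec (Q 0).

Lemma S_one : S 1 (fun _ _ => 1).
Proof. by apply: (S_ext (@SQ 1 0 ord0 isT)) => x y; rewrite Q0_one. Qed.

Lemma S_monom i j : S (i + j).+1 (fun x y => x ^+ i * y ^+ j).
Proof.
elim: i => [|i IH].
  rewrite add0n; elim: j => [|j IH].
    by apply: (S_ext S_one) => x y; rewrite !expr0 mulr1.
  apply: (S_ext (S_mul hy IH)) => x y.
  by rewrite /= !expr0 !mul1r exprS.
apply: (S_ext (S_mul hx IH)) => x y.
by rewrite /= exprS mulrA.
Qed.

Lemma S_lower n (c : nat -> nat -> R) :
  S n (fun x y => \sum_(i < n) \sum_(j < n - i) c i j * x ^+ i * y ^+ j).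
Proof.
apply: S_sum => i; apply: S_sum => j.
apply: (S_ext (Sscale (c i j) (S_mono _ (S_monom i j)))) => [|x y].
  by have := ltn_ord j; lia.
by rewrite mulrA.
Qed.

Lemma S_monic n (q : R -> R -> 'cV[R]_n.+1) (k : 'I_n.+1) :
  monic_vec q -> S n.+1 (fun x y => q x y k 0).
Proof.
rewrite /monic_vec => -[c hc]; apply: S_ext; last by move=> x y; rewrite hc.
apply: Sadd; last exact: (S_mono (leqnSn n) (S_lower n (c k))).
have := S_monom (n - k) k; rewrite subnK; last by rewrite -ltnS.
done.
Qed.

Lemma S_monic_diff n (q1 q2 : R -> R -> 'cV[R]_n.+1) (k : 'I_n.+1) :
  monic_vec q1 -> monic_vec q2 -> S n (fun x y => q1 x y k 0 - q2 x y k 0).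
Proof.
rewrite /monic_vec => -[c1 h1] [c2 h2]; apply: S_ext; last by move=> x y; rewrite h1 h2.
apply: (S_ext (S_sub (S_lower n (c1 k)) (S_lower n (c2 k)))) => x y.
by rewrite opprD addrACA subrr add0r.
Qed.

End SpanTh.
Section IntTh.
Variable R : realType.
Variable w : R -> R -> R.

Definition Int (f : R -> R -> R) : Prop :=
  (@mu2 R).-integrable setT (fun z : R * R => (f z.1 z.2 * w z.1 z.2)%:E).
Definition I (f : R -> R -> R) : R :=
  Rintegral (@mu2 R) setT (fun z : R * R => f z.1 z.2 * w z.1 z.2).

Lemma Int_ext f g : Int f -> (forall x y, f x y = g x y) -> Int g.
Proof. by move=> + fg; have -> : g = f by apply/funext=> x; apply/funext=> y. Qed.

Lemma I_ext f g : (forall x y, f x y = g x y) -> I f = I g.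
Proof. by move=> fg; have -> : g = f by apply/funext=> x; apply/funext=> y. Qed.

Lemma Int_add f g : Int f -> Int g -> Int (fun x y => f x y + g x y).
Proof.
move=> hf hg; have := integrableD measurableT hf hg.
by apply: eq_integrable => // z _ /=; rewrite mulrDl.
Qed.

Lemma Int_scale c f : Int f -> Int (fun x y => c * f x y).
Proof.
move=> hf; have := integrableZl measurableT c hf.
by apply: eq_integrable => // z _ /=; rewrite -EFinM mulrA.
Qed.

Lemma Int_sub f g : Int f -> Int g -> Int (fun x y => f x y - g x y).
Proof.
move=> hf hg; apply: (Int_ext (Int_add hf (Int_scale (-1) hg))) => x y.
by rewrite mulN1r.
Qed.


Lemma I_add f g : Int f -> Int g -> I (fun x y => f x y + g x y) = I f + I g.
Proof.
move=> hf hg; rewrite /I -RintegralD //.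
by apply: eq_Rintegral => z _; rewrite mulrDl.
Qed.

Lemma I_scale c f : Int f -> I (fun x y => c * f x y) = c * I f.
Proof.
move=> hf; rewrite /I -RintegralZl //.
by apply: eq_Rintegral => z _; rewrite mulrA.
Qed.

Lemma I_sub f g : Int f -> Int g -> I (fun x y => f x y - g x y) = I f - I g.
Proof.
move=> hf hg; rewrite /I -RintegralB //.
by apply: eq_Rintegral => z _; rewrite mulrBl.
Qed.

End IntTh.
Lemma deriv_of_bound (R : realType) (F : R -> R) t M C :
  (forall h, `|h| <= 1 -> `|F (h + t) - F t - h * M| <= C * h ^+ 2) ->
  derivable F t 1 /\ derive1 F t = M.
Proof.
move=> hb.
have cv : (fun h : R => h^-1 *: (F (h + t) - F t)) @ 0^' --> M.
  apply/cvgrPdist_le => e e0.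
  have C0 : 0 <= C.
    have := hb 1; rewrite normr1 lexx expr1n mulr1 => /(_ isT).
    exact: le_trans.
  have d0 : 0 < Num.min 1 (e / (C + 1)).
    by rewrite lt_min ltr01 /= divr_gt0// ltr_wpDl.
  exists (Num.min 1 (e / (C + 1))) => //.
  move=> h /= hd hn0.
  rewrite sub0r normrN lt_min in hd; case/andP: hd => h1 he.
  have := hb h (ltW h1).
  have -> : M - h^-1 *: (F (h + t) - F t) = - h^-1 * (F (h + t) - F t - h * M).
    rewrite /GRing.scale /=. field. done.
  rewrite normrM normrN normrV ?unitfE // => hle.
  rewrite ler_pdivrMl ?normr_gt0 //.
  apply: (le_trans hle).
  have ha : `|h| * (C + 1) <= e.
    by rewrite -ler_pdivlMr ?ltW // ltr_wpDl.
  rewrite -(real_normK (num_real h)).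
  have := normr_ge0 h.
  nra.
split.
  rewrite /derivable.
  have -> : (fun h : R => h^-1 *: ((F \o shift t) (h *: 1) - F t)) =
            (fun h : R => h^-1 *: (F (h + t) - F t)).
    by apply/funext => h /=; rewrite /GRing.scale /= mulr1.
  exact: (cvgP _ cv).
exact: cvg_lim.
Qed.

Section OrthTh.
Variable R : realType.
Variable w : R -> R -> R.
Variable Q : forall n, R -> R -> 'cV[R]_n.+1.
Hypothesis hM : is_MOPS w Q.

Lemma I_QQ m n a b :
  I w (fun x y => Q m x y a 0 * Q n x y b 0) = gram w (Q m) (Q n) a b.
Proof. by rewrite /gram mxE. Qed.

Lemma Int_QQ m n (a : 'I_m.+1) (b : 'I_n.+1) :
  Int w (fun x y => Q m x y a 0 * Q n x y b 0).
Proof. by case: hM => _ h _ _; exact: h. Qed.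

Lemma Int_QS m (a : 'I_m.+1) N g :
  S Q N g -> Int w (fun x y => Q m x y a 0 * g x y).
Proof.
elim => [|n b _|f1 g1 _ h1 _ h2|c f1 _ h1].
- apply: (Int_ext (Int_scale 0 (Int_QQ a a))) => x y; by rewrite !mul0r mulr0.
- exact: Int_QQ.
- by apply: (Int_ext (Int_add h1 h2)) => x y; rewrite mulrDr.
- by apply: (Int_ext (Int_scale c h1)) => x y; rewrite mulrCA.
Qed.

Lemma Int_SS N M f g : S Q N f -> S Q M g -> Int w (fun x y => f x y * g x y).
Proof.
move=> + hg; elim => [|n b _|f1 g1 _ h1 _ h2|c f1 _ h1].
- apply: (Int_ext (Int_scale 0 (Int_QQ (ord0 : 'I_1) (ord0 : 'I_1)))) => x y; by rewrite !mul0r.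
- exact: Int_QS hg.
- by apply: (Int_ext (Int_add h1 h2)) => x y; rewrite mulrDl.
- by apply: (Int_ext (Int_scale c h1)) => x y; rewrite mulrA.
Qed.

Lemma Orth n (k : 'I_n.+1) f :
  S Q n f -> I w (fun x y => Q n x y k 0 * f x y) = 0.
Proof.
elim => [|m b hm|f1 g1 s1 h1 s2 h2|c f1 s1 h1].
- rewrite (@I_ext _ w _ (fun x y => 0 * (Q n x y k 0 * Q n x y k 0))).
    by rewrite I_scale ?mul0r //; exact: Int_QQ.
  by move=> x y; rewrite !mul0r mulr0.
- rewrite I_QQ; case: hM => _ _ h _; rewrite h ?mxE //.
  by move=> e; rewrite e ltnn in hm.
- rewrite (@I_ext _ w _ (fun x y => Q n x y k 0 * f1 x y + Q n x y k 0 * g1 x y)).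
    by rewrite I_add ?h1 ?h2 ?addr0 //; apply: Int_QS; eassumption.
  by move=> x y; rewrite mulrDr.
- rewrite (@I_ext _ w _ (fun x y => c * (Q n x y k 0 * f1 x y))).
    by rewrite I_scale ?h1 ?mulr0 //; apply: Int_QS; eassumption.
  by move=> x y; rewrite mulrCA.
Qed.

Lemma I_zero f : (forall x y, f x y = 0) -> I w f = 0.
Proof.
move=> hf; rewrite /I.
have -> : (fun z : R * R => f z.1 z.2 * w z.1 z.2) = (fun _ => 0).
  by apply/funext => z; rewrite hf mul0r.
by rewrite Rintegral_cst // mul0r.
Qed.

Lemma Int_zero f : (forall x y, f x y = 0) -> Int w f.
Proof.
move=> hf; apply: (Int_ext (Int_scale 0 (Int_QQ (ord0 : 'I_1) (ord0 : 'I_1)))).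
by move=> x y; rewrite hf mul0r.
Qed.

Lemma Int_sum (T : Type) (r : seq T) (G : T -> R -> R -> R) :
  (forall a, Int w (G a)) -> Int w (fun x y => \sum_(a <- r) G a x y).
Proof.
move=> hG; elim: r => [|a r IH]; first by apply: Int_zero => x y; rewrite big_nil.
by apply: (Int_ext (Int_add (hG a) IH)) => x y; rewrite big_cons.
Qed.

Lemma I_sum (T : Type) (r : seq T) (G : T -> R -> R -> R) :
  (forall a, Int w (G a)) ->
  I w (fun x y => \sum_(a <- r) G a x y) = \sum_(a <- r) I w (G a).
Proof.
move=> hG; elim: r => [|a r IH]; first by rewrite big_nil; apply: I_zero => x y; rewrite big_nil.
rewrite big_cons -IH -I_add //; last exact: Int_sum.
by apply: I_ext => x y; rewrite big_cons.
Qed.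

Lemma I_suml (T : Type) (r : seq T) (c : T -> R) (F : T -> R -> R -> R) g :
  (forall a, Int w (fun x y => F a x y * g x y)) ->
  I w (fun x y => (\sum_(a <- r) c a * F a x y) * g x y)
  = \sum_(a <- r) c a * I w (fun x y => F a x y * g x y).
Proof.
move=> hF.
rewrite (@I_ext _ w _ (fun x y => \sum_(a <- r) c a * (F a x y * g x y))).
  rewrite I_sum; last by move=> a; exact: Int_scale.
  by apply: eq_bigr => a _; rewrite I_scale.
by move=> x y; rewrite big_distrl; apply: eq_bigr => a _; rewrite mulrA.
Qed.

Lemma I_sumr (T : Type) (r : seq T) (c : T -> R) (F : T -> R -> R -> R) g :
  (forall a, Int w (fun x y => g x y * F a x y)) ->
  I w (fun x y => g x y * (\sum_(a <- r) c a * F a x y))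
  = \sum_(a <- r) c a * I w (fun x y => g x y * F a x y).
Proof.
move=> hF.
rewrite (@I_ext _ w _ (fun x y => \sum_(a <- r) c a * (g x y * F a x y))).
  rewrite I_sum; last by move=> a; exact: Int_scale.
  by apply: eq_bigr => a _; rewrite I_scale.
by move=> x y; rewrite big_distrr; apply: eq_bigr => a _; rewrite mulrCA.
Qed.

End OrthTh.

Lemma S_Qprev (R : realType) (Q : forall n, R -> R -> 'cV[R]_n.+1) m (c : 'I_m) :
  S Q m (fun x y => Qprev Q m x y c 0).
Proof. by case: m c => [|m] c; [case: c | apply: SQ]. Qed.

Section RecTh.
Variable R : realType.
Variable w : R -> R -> R.
Variable Q : forall n, R -> R -> 'cV[R]_n.+1.
Hypothesis hM : is_MOPS w Q.
Variable phi : R -> R -> R.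
Variable L : forall m, 'M[R]_(m, m.+1).
Variable E : forall n, 'M[R]_(n.+1, n).
Hypothesis hrec : forall n x y,
  phi x y *: Q n x y = L n.+1 *m Q n.+1 x y + E n *m Qprev Q n x y.

Lemma I_rec m (a : 'I_m.+1) g N : S Q N g ->
  I w (fun x y => (phi x y * Q m x y a 0) * g x y) =
  \sum_c L m.+1 a c * I w (fun x y => Q m.+1 x y c 0 * g x y)
  + \sum_c E m a c * I w (fun x y => Qprev Q m x y c 0 * g x y).
Proof.
move=> hg.
rewrite (@I_ext _ w _ (fun x y => (\sum_c L m.+1 a c * Q m.+1 x y c 0) * g x y
           + (\sum_c E m a c * Qprev Q m x y c 0) * g x y)); last first.
  move=> x y; move: (hrec m x y) => /matrixP/(_ a 0); rewrite !mxE => ->.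
  by rewrite mulrDl.
rewrite I_add.
- rewrite (I_suml hM); last by move=> c; exact: (Int_QS hM _ hg).
  rewrite (I_suml hM) //; move=> c; exact: (Int_SS hM (S_Qprev Q c) hg).
- have hs : S Q m.+2 (fun x y => \sum_c L m.+1 a c * Q m.+1 x y c 0).
    by apply: S_sum => c; apply: Sscale; apply: SQ.
  exact: (Int_SS hM hs hg).
- have hs : S Q m (fun x y => \sum_c E m a c * Qprev Q m x y c 0).
    by apply: S_sum => c; apply: Sscale; apply: S_Qprev.
  exact: (Int_SS hM hs hg).
Qed.

Lemma Iprev m n (c : 'I_m) (j : 'I_n.+1) : m != n.+1 ->
  I w (fun x y => Qprev Q m x y c 0 * Q n x y j 0) = 0.
Proof.
case: m c => [|m] c; first by case: c.
move=> hmn; rewrite /= I_QQ; case: hM => _ _ h _; rewrite h ?mxE //.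
by move=> e; rewrite e eqxx in hmn.
Qed.

Lemma I_QQn m n (a : 'I_m.+1) (b : 'I_n.+1) : m <> n ->
  I w (fun x y => Q m x y a 0 * Q n x y b 0) = 0.
Proof. by move=> hmn; rewrite I_QQ; case: hM => _ _ h _; rewrite h ?mxE. Qed.

Lemma Mx n (i j : 'I_n.+1) :
  I w (fun x y => (phi x y * Q n x y i 0) * (phi x y * Q n x y j 0)) =
  (L n.+1 *m E n.+1 *m gram w (Q n) (Q n)
   + E n *m L n *m gram w (Q n) (Q n)) i j.
Proof.
have hSj : S Q n.+2 (fun x y => phi x y * Q n x y j 0).
  exact: (S_mul hrec (SQ Q j (ltnSn n))).
rewrite (I_rec i hSj) mxE -!mulmxA !mxE.
congr (_ + _).
  apply: eq_bigr => a _; rewrite !mxE; congr (_ * _).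
  rewrite (@I_ext _ w _ (fun x y => (phi x y * Q n.+1 x y a 0) * Q n x y j 0)); last first.
    by move=> x y; rewrite mulrCA mulrA.
  rewrite (I_rec a (SQ Q j (ltnSn n))).
  rewrite big1 ?add0r; last first.
    by move=> c _; rewrite I_QQn ?mulr0 //; lia.
  by apply: eq_bigr => c _; rewrite I_QQ.
case: n i j hSj => [|n] i j hSj; first by rewrite !big_ord0.
apply: eq_bigr => b _; rewrite !mxE; congr (_ * _).
rewrite (@I_ext _ w _ (fun x y => (phi x y * Q n x y b 0) * Q n.+1 x y j 0)); last first.
  by move=> x y /=; rewrite mulrCA mulrA.
rewrite (I_rec b (SQ Q j (ltnSn n.+1))).
rewrite [X in _ + X]big1 ?addr0; last first.
  by move=> c _; rewrite Iprev ?mulr0 //; lia.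
by apply: eq_bigr => c _; rewrite I_QQ.
Qed.

End RecTh.
Section ExpB.
Variable R : realType.
Implicit Types v : R.

Lemma exp_facts v : [/\ 0 < expR v, 1 + v <= expR v, expR v * (1 - v) <= 1,
   expR v <= expR `|v| & 1 + `|v| <= expR `|v|].
Proof.
have e0 := expR_gt0 v.
split => //; first exact: expR_ge1Dx.
- have := expR_ge1Dx (- v); rewrite expRN => h.
  by have := ler_wpM2l (ltW e0) h; rewrite mulfV // gt_eqF.
- by rewrite ler_expR ler_norm.
- exact: expR_ge1Dx.
Qed.

Lemma expb1 v : `|expR v - 1 - v| <= v ^+ 2 * expR `|v|.
Proof.
have [e0 e1 e2 e3 e4] := exp_facts v.
have [v0|v0] := leP 0 v.
  rewrite ger0_norm in e3 e4 *; last exact v0.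
  rewrite ger0_norm; last lra.
  nra.
rewrite ger0_norm; last lra.
rewrite ltr0_norm // in e4 *.
have : expR v - 1 - v <= v ^+ 2 by nra.
have : 0 <= v ^+ 2 by nra.
nra.
Qed.

Lemma expb2 v : `|expR v - 1| <= `|v| * expR `|v|.
Proof.
have [e0 e1 e2 e3 e4] := exp_facts v.
have [v0|v0] := leP 0 v.
  rewrite ger0_norm in e3 e4 *; last exact v0.
  rewrite ger0_norm; last lra.
  nra.
rewrite ler0_norm; last by rewrite subr_le0 -expR0 ler_expR ltW.
rewrite ltr0_norm // in e4 *.
nra.
Qed.

Lemma expb3 v : (expR v)^-1 <= expR `|v|.
Proof. by rewrite -expRN ler_expR -normrN ler_norm. Qed.

End ExpB.

Ltac nneg := repeat first [ assumption | exact: sqr_ge0 | exact: normr_ge0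
  | exact: expR_ge0 | (apply: ltW; assumption) | apply: mulr_ge0 | apply: addr_ge0 ].

Section WTh.
Variable R : realType.
Variables a40 a22 a04 : R.
Local Notation W := (Wt a40 a22 a04).

Lemma eqle (x y : R) : x = y -> x <= y.
Proof. by move->. Qed.

Lemma Wshift h t x y : W (h + t) x y = W t x y * expR (h * (x ^+ 2 + y ^+ 2)).
Proof. by rewrite /Wt -expRD; congr expR; ring. Qed.

Lemma W_gt0 t x y : 0 < W t x y.
Proof. exact: expR_gt0. Qed.

Lemma r_ge0 (x y : R) : 0 <= x ^+ 2 + y ^+ 2.
Proof. by rewrite addr_ge0 // sqr_ge0. Qed.

Lemma Wle t k k' x y : 0 <= k -> k <= k' ->
  W t x y * expR (k * (x ^+ 2 + y ^+ 2)) <= W (k' + t) x y.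
Proof.
move=> k0 kk; rewrite Wshift ler_pM2l ?W_gt0 // ler_expR.
by rewrite ler_wpM2r // r_ge0.
Qed.

Lemma P1 (a h t x y : R) : `|h| <= 1 ->
  `|a * W (h + t) x y - a * W t x y - h * ((x ^+ 2 + y ^+ 2) * a * W t x y)|
  <= h ^+ 2 * `|(x ^+ 2 + y ^+ 2) ^+ 2 * a * W (1 + t) x y|.
Proof.
move=> h1; set r := x ^+ 2 + y ^+ 2; have r0 : 0 <= r by exact: r_ge0.
have w0 := W_gt0 t x y; have w1 := W_gt0 (1 + t) x y.
rewrite Wshift -/r.
have -> : a * (W t x y * expR (h * r)) - a * W t x y - h * (r * a * W t x y)
  = a * W t x y * (expR (h * r) - 1 - h * r) by ring.
rewrite normrM [X in _ <= _ * X]normrM normrM (gtr0_norm w0) (gtr0_norm w1).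
rewrite normrM (ger0_norm (sqr_ge0 r)).
apply: (le_trans (ler_wpM2l _ (expb1 (h * r)))).
  by rewrite mulr_ge0 // ltW.
have hE : W t x y * expR `|h * r| <= W (1 + t) x y.
  by rewrite normrM (ger0_norm r0) Wle.
have := normr_ge0 a; have := sqr_ge0 (h * r).
rewrite exprMn.
move: (expR `|h * r|) hE => E hE.
have : 0 <= h ^+ 2 by exact: sqr_ge0.
have : 0 <= r ^+ 2 by exact: sqr_ge0.
move=> _ _ _ a0.
have c0 : 0 <= `|a| * (h ^+ 2 * r ^+ 2).
  by apply: mulr_ge0 => //; apply: mulr_ge0; exact: sqr_ge0.
have H := ler_wpM2l c0 hE.
apply: le_trans (le_trans _ H) _; apply: eqle; ring.
Qed.

Lemma P2 (d b h t x y : R) : `|h| <= 1 ->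
  `|d * b * W (h + t) x y - d * b * W t x y|
  <= 2^-1 * (d * d * W (h + t) x y)
     + 2^-1 * h ^+ 2 * ((x ^+ 2 + y ^+ 2) ^+ 2 * b * b * W (3 + t) x y).
Proof.
move=> h1; set r := x ^+ 2 + y ^+ 2; have r0 : 0 <= r by exact: r_ge0.
have w0 := W_gt0 t x y; have w3 := W_gt0 (3 + t) x y.
rewrite Wshift -/r.
set e := expR (h * r); set w := W t x y.
have e0 : 0 < e by exact: expR_gt0.
set E := expR `|h * r|.
have hu : `|e - 1| <= `|h| * r * E by rewrite -(ger0_norm r0) -normrM expb2.
have hi : e^-1 <= E by exact: expb3.
have E0 : 0 <= E by exact: expR_ge0.
have eE : E * E * E = expR ((3 * `|h|) * r).
  rewrite /E -!expRD normrM (ger0_norm r0); congr expR; ring.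
have hE3 : w * (E * E * E) <= W (3 + t) x y.
  rewrite eE; apply: Wle; first by rewrite mulr_ge0.
  by rewrite -[3 in leRHS]mulr1 ler_wpM2l.
have -> : d * b * (w * e) - d * b * w = d * b * w * (e - 1) by ring.
rewrite !normrM (gtr0_norm w0).
set A := `|d|; set B := `|b|; set u := `|e - 1|.
have A0 : 0 <= A by exact: normr_ge0.
have B0 : 0 <= B by exact: normr_ge0.
have u0 : 0 <= u by exact: normr_ge0.
have amgm : A * B * w * u <= 2^-1 * (A ^+ 2 * w * e) + 2^-1 * (B ^+ 2 * w * u ^+ 2 * e^-1).
  have : 0 <= w * e^-1 * (A * e - B * u) ^+ 2.
    apply: mulr_ge0; last exact: sqr_ge0.
    by apply: mulr_ge0; [exact: ltW w0 | rewrite invr_ge0 ltW].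
  have -> : w * e^-1 * (A * e - B * u) ^+ 2 =
     A ^+ 2 * w * e + B ^+ 2 * w * u ^+ 2 * e^-1 - 2 * (A * B * w * u).
    by field; rewrite gt_eqF.
  lra.
apply: (le_trans amgm).
have -> : A ^+ 2 = d * d by rewrite /A real_normK ?num_real // expr2.
have -> : B ^+ 2 = b * b by rewrite /B real_normK ?num_real // expr2.
have -> : d * d * (w * e) = d * d * w * e by ring.
rewrite lerD2l -[X in _ <= X]mulrA ler_pM2l ?invr_gt0 //.
have hu2 : u ^+ 2 * e^-1 <= h ^+ 2 * r ^+ 2 * (E * E * E).
  have : u ^+ 2 <= (`|h| * r * E) ^+ 2.
    by rewrite lerXn2r // nnegrE; nneg.
  have hh : `|h| ^+ 2 = h ^+ 2 by rewrite real_normK ?num_real.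
  rewrite !exprMn hh => hu2.
  have ei0 : 0 <= e^-1 by rewrite invr_ge0 ltW.
  have : 0 <= u ^+ 2 by exact: sqr_ge0.
  have : 0 <= h ^+ 2 * r ^+ 2 * E ^+ 2 by nneg.
  rewrite !expr2 in hu2 * => ? ?.
  nra.
have bb : 0 <= b * b by rewrite -expr2 sqr_ge0.
have : b * b * w * (u ^+ 2 * e^-1) <= b * b * w * (h ^+ 2 * r ^+ 2 * (E * E * E)).
  by apply: ler_wpM2l => //; nneg.
have : h ^+ 2 * r ^+ 2 * b * b * (w * (E * E * E)) <= h ^+ 2 * r ^+ 2 * b * b * W (3 + t) x y.
  by apply: ler_wpM2l => //; rewrite -mulrA; nneg.
move=> hb ha.
have -> : b * b * w * u ^+ 2 / e = b * b * w * (u ^+ 2 * e^-1) by ring.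
apply: (le_trans ha); apply: le_trans (le_trans _ hb) _; apply: eqle; ring.
Qed.

End WTh.

Section RInt.
Variable R : realType.
Definition Ig (F : R * R -> R) := (@mu2 R).-integrable setT (EFin \o F).
Definition RI (F : R * R -> R) := Rintegral (@mu2 R) setT F.

Lemma Ig_D F G : Ig F -> Ig G -> Ig (fun z => F z + G z).
Proof.
move=> hf hg; have := integrableD measurableT hf hg.
by apply: eq_integrable => // z _ /=; rewrite EFinD.
Qed.

Lemma Ig_Z c F : Ig F -> Ig (fun z => c * F z).
Proof.
move=> hf; have := integrableZl measurableT c hf.
by apply: eq_integrable => // z _ /=; rewrite EFinM.
Qed.

Lemma Ig_B F G : Ig F -> Ig G -> Ig (fun z => F z - G z).
Proof.
move=> hf hg; have := integrableB measurableT hf hg.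
by apply: eq_integrable => // z _ /=; rewrite EFinB.
Qed.

Lemma Ig_N F : Ig F -> Ig (fun z => `|F z|).
Proof. by move=> hf; exact: (integrable_norm hf). Qed.

Lemma RI_D F G : Ig F -> Ig G -> RI (fun z => F z + G z) = RI F + RI G.
Proof. by move=> hf hg; rewrite /RI RintegralD. Qed.

Lemma RI_B F G : Ig F -> Ig G -> RI (fun z => F z - G z) = RI F - RI G.
Proof. by move=> hf hg; rewrite /RI RintegralB. Qed.

Lemma RI_Z c F : Ig F -> RI (fun z => c * F z) = c * RI F.
Proof. by move=> hf; rewrite /RI RintegralZl. Qed.

Lemma RI_bound F B : Ig F -> Ig B -> (forall z, `|F z| <= B z) -> `|RI F| <= RI B.
Proof.
move=> hf hb hle; apply: le_trans (le_normr_Rintegral measurableT hf) _.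
apply: le_Rintegral => //.
all: try exact: Ig_N.
all: try by move=> z _; exact: hle.
Qed.

End RInt.

Section Main.
Variable R : realType.
Variables a40 a22 a04 : R.
Local Notation W := (Wt a40 a22 a04).
Variable Q : R -> forall n, R -> R -> 'cV[R]_n.+1.
Variables E1 E2 : R -> forall n, 'M[R]_(n.+1, n).
Hypothesis hM : forall t, is_MOPS (W t) (Q t).
Hypothesis hx : forall t n x y,
  x *: Q t n x y = L1 n.+1 *m Q t n.+1 x y + E1 t n *m Qprev (Q t) n x y.
Hypothesis hy : forall t n x y,
  y *: Q t n x y = L2 n.+1 *m Q t n.+1 x y + E2 t n *m Qprev (Q t) n x y.

Lemma monicQ t n : monic_vec (Q t n).
Proof. by case: (hM t). Qed.

Lemma S_r s N f : S (Q s) N f -> S (Q s) N.+2 (fun x y => (x ^+ 2 + y ^+ 2) * f x y).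
Proof.
move=> hf.
have hxx := S_mul (phi := fun x _ => x) (hx s) (S_mul (phi := fun x _ => x) (hx s) hf).
have hyy := S_mul (phi := fun _ y => y) (hy s) (S_mul (phi := fun _ y => y) (hy s) hf).
by apply: (S_ext (Sadd hxx hyy)) => x y /=; ring.
Qed.

Lemma SQt s t n (k : 'I_n.+1) : S (Q s) n.+1 (fun x y => Q t n x y k 0).
Proof. exact: (S_monic (hx s) (hy s) (monicQ s 0) k (monicQ t n)). Qed.

Lemma Sdiff u s t n (k : 'I_n.+1) :
  S (Q u) n (fun x y => Q s n x y k 0 - Q t n x y k 0).
Proof. exact: (S_monic_diff (hx u) (hy u) (monicQ u 0) k (monicQ s n) (monicQ t n)). Qed.

Lemma T2gen s t h (d b : R -> R -> R) : `|h| <= 1 -> s = h + t ->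
  Int (W s) (fun x y => d x y * b x y) -> Int (W t) (fun x y => d x y * b x y) ->
  Int (W s) (fun x y => d x y * d x y) ->
  Int (W (3 + t)) (fun x y => (x ^+ 2 + y ^+ 2) ^+ 2 * b x y * b x y) ->
  `|I (W s) (fun x y => d x y * b x y) - I (W t) (fun x y => d x y * b x y)|
  <= 2^-1 * I (W s) (fun x y => d x y * d x y)
     + 2^-1 * h ^+ 2 * I (W (3 + t)) (fun x y => (x ^+ 2 + y ^+ 2) ^+ 2 * b x y * b x y).
Proof.
move=> h1 -> i1 i2 i3 i4.
rewrite /I -!RI_B //.
rewrite -(RI_Z (2^-1) i3) -(RI_Z (2^-1 * h ^+ 2) i4) -RI_D; try exact: Ig_Z.
apply: RI_bound; first exact: Ig_B.
  by apply: Ig_D; exact: Ig_Z.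
move=> z /=; apply: le_trans (P2 a40 a22 a04 (d z.1 z.2) (b z.1 z.2) t z.1 z.2 h1) _.
by apply: eqle; ring.
Qed.


Lemma T1gen s t h (a : R -> R -> R) : `|h| <= 1 -> s = h + t ->
  Int (W s) a -> Int (W t) a -> Int (W t) (fun x y => (x ^+ 2 + y ^+ 2) * a x y) ->
  Int (W (1 + t)) (fun x y => (x ^+ 2 + y ^+ 2) ^+ 2 * a x y) ->
  `|I (W s) a - I (W t) a - h * I (W t) (fun x y => (x ^+ 2 + y ^+ 2) * a x y)|
  <= h ^+ 2 * RI (fun z => `|(z.1 ^+ 2 + z.2 ^+ 2) ^+ 2 * a z.1 z.2 * W (1 + t) z.1 z.2|).
Proof.
move=> h1 -> i1 i2 i3 i4.
have i4' := Ig_N i4.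
rewrite /I -(RI_Z h i3) -!RI_B //; last first.
- exact: Ig_Z.
- exact: Ig_B.
rewrite -(RI_Z (h ^+ 2) i4').
apply: RI_bound.
- by apply: Ig_B; [apply: Ig_B|apply: Ig_Z].
- exact: Ig_Z.
move=> z /=; exact: (P1 a40 a22 a04 (a z.1 z.2) t z.1 z.2 h1).
Qed.


Lemma est t n (i j : 'I_n.+1) : exists C, forall h, `|h| <= 1 ->
  `|gram (W (h + t)) (Q (h + t) n) (Q (h + t) n) i j - gram (W t) (Q t n) (Q t n) i j
    - h * I (W t) (fun x y => (x ^+ 2 + y ^+ 2) * (Q t n x y i 0 * Q t n x y j 0))|
  <= C * h ^+ 2.
Proof.
have IS u N M f g : S (Q u) N f -> S (Q u) M g -> Int (W u) (fun x y => f x y * g x y).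
  move=> hf hg; exact: (Int_SS (hM u) hf hg).
have Sq u k : S (Q u) n.+1 (fun x y => Q t n x y k 0) by exact: SQt.
have Ir2 u k l : Int (W u) (fun x y => (x ^+ 2 + y ^+ 2) ^+ 2 * Q t n x y k 0 * Q t n x y l 0).
  by apply: (Int_ext (IS _ _ _ _ _ (S_r (S_r (Sq u k))) (Sq u l))) => x y; ring.
have Ir2' u : Int (W u) (fun x y => (x ^+ 2 + y ^+ 2) ^+ 2 * (Q t n x y i 0 * Q t n x y j 0)).
  by apply: (Int_ext (Ir2 u i j)) => x y; ring.
have Ir1 u : Int (W u) (fun x y => (x ^+ 2 + y ^+ 2) * (Q t n x y i 0 * Q t n x y j 0)).
  by apply: (Int_ext (IS _ _ _ _ _ (S_r (Sq u i)) (Sq u j))) => x y; ring.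
exists (RI (fun z => `|(z.1 ^+ 2 + z.2 ^+ 2) ^+ 2 * (Q t n z.1 z.2 i 0 * Q t n z.1 z.2 j 0)
                        * W (1 + t) z.1 z.2|)
        + 2^-1 * I (W (3 + t)) (fun x y => (x ^+ 2 + y ^+ 2) ^+ 2 * Q t n x y i 0 * Q t n x y i 0)
        + 2^-1 * I (W (3 + t)) (fun x y => (x ^+ 2 + y ^+ 2) ^+ 2 * Q t n x y j 0 * Q t n x y j 0)).
move=> h h1.
set s := h + t.
have Sp k : S (Q s) n.+1 (fun x y => Q s n x y k 0) by exact: SQt.
have Sd u k : S (Q u) n (fun x y => Q s n x y k 0 - Q t n x y k 0) by exact: Sdiff.
have Sdn u k : S (Q u) n.+1 (fun x y => Q s n x y k 0 - Q t n x y k 0).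
  exact: (S_mono (leqnSn n) (Sd u k)).
rewrite -!I_QQ.
have iA : Int (W s) (fun x y => Q t n x y i 0 * Q t n x y j 0).
  exact: IS _ _ _ _ _ (Sq s i) (Sq s j).
have iB : Int (W s) (fun x y => (Q s n x y i 0 - Q t n x y i 0) * Q t n x y j 0).
  exact: IS _ _ _ _ _ (Sdn s i) (Sq s j).
have iC : Int (W s) (fun x y => Q s n x y i 0 * (Q s n x y j 0 - Q t n x y j 0)).
  exact: IS _ _ _ _ _ (Sp i) (Sdn s j).
have iAB := Int_add iA iB.
have e1 : I (W s) (fun x y => Q s n x y i 0 * Q s n x y j 0)
   = I (W s) (fun x y => Q t n x y i 0 * Q t n x y j 0)
     + I (W s) (fun x y => (Q s n x y i 0 - Q t n x y i 0) * Q t n x y j 0).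
  rewrite -I_add //.
  rewrite (@I_ext _ _ _ (fun x y => (Q t n x y i 0 * Q t n x y j 0
          + (Q s n x y i 0 - Q t n x y i 0) * Q t n x y j 0)
          + Q s n x y i 0 * (Q s n x y j 0 - Q t n x y j 0))); last first.
    by move=> x y; ring.
  have o1 : I (W s) (fun x y => Q s n x y i 0 * (Q s n x y j 0 - Q t n x y j 0)) = 0.
    exact: (Orth (hM s) i (Sd s j)).
  by rewrite [LHS]I_add // o1 addr0.
have e2 : I (W t) (fun x y => (Q s n x y i 0 - Q t n x y i 0) * Q t n x y j 0) = 0.
  rewrite (@I_ext _ _ _ (fun x y => Q t n x y j 0 * (Q s n x y i 0 - Q t n x y i 0))).
    exact: (Orth (hM t) j (Sd t i)).
  by move=> x y; rewrite mulrC.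
set X := I (W s) (fun x y => (Q s n x y i 0 - Q t n x y i 0) * (Q s n x y i 0 - Q t n x y i 0)).
set Ki := I (W (3 + t)) (fun x y => (x ^+ 2 + y ^+ 2) ^+ 2 * Q t n x y i 0 * Q t n x y i 0).
set Kj := I (W (3 + t)) (fun x y => (x ^+ 2 + y ^+ 2) ^+ 2 * Q t n x y j 0 * Q t n x y j 0).
have hX : X <= h ^+ 2 * Ki.
  have tb := T2gen (d := fun x y => Q s n x y i 0 - Q t n x y i 0)
               (b := fun x y => Q t n x y i 0) h1 erefl
               (IS _ _ _ _ _ (Sdn s i) (Sq s i)) (IS _ _ _ _ _ (Sdn t i) (Sq t i))
               (IS _ _ _ _ _ (Sdn s i) (Sdn s i)) (Ir2 _ i i).
  have e3 : I (W t) (fun x y => (Q s n x y i 0 - Q t n x y i 0) * Q t n x y i 0) = 0.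
    rewrite (@I_ext _ _ _ (fun x y => Q t n x y i 0 * (Q s n x y i 0 - Q t n x y i 0))).
      exact: (Orth (hM t) i (Sd t i)).
    by move=> x y; rewrite mulrC.
  have e4 : X = - I (W s) (fun x y => (Q s n x y i 0 - Q t n x y i 0) * Q t n x y i 0).
    rewrite /X (@I_ext _ _ _ (fun x y => Q s n x y i 0 * (Q s n x y i 0 - Q t n x y i 0)
        - (Q s n x y i 0 - Q t n x y i 0) * Q t n x y i 0)); last by move=> x y; ring.
    have i1 : Int (W s) (fun x y => Q s n x y i 0 * (Q s n x y i 0 - Q t n x y i 0)).
      exact: IS _ _ _ _ _ (Sp i) (Sdn s i).
    have i2 : Int (W s) (fun x y => (Q s n x y i 0 - Q t n x y i 0) * Q t n x y i 0).
      exact: IS _ _ _ _ _ (Sdn s i) (Sq s i).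
    have o1 : I (W s) (fun x y => Q s n x y i 0 * (Q s n x y i 0 - Q t n x y i 0)) = 0.
      exact: (Orth (hM s) i (Sd s i)).
    by rewrite I_sub // o1 sub0r.
  rewrite e3 subr0 -/X -/Ki in tb.
  have hXn : `|X| = `|I (W s) (fun x y => (Q s n x y i 0 - Q t n x y i 0) * Q t n x y i 0)|.
    by rewrite e4 normrN.
  have := ler_norm X.
  lra.
have tj := T2gen (d := fun x y => Q s n x y i 0 - Q t n x y i 0)
               (b := fun x y => Q t n x y j 0) h1 erefl
               (IS _ _ _ _ _ (Sdn s i) (Sq s j)) (IS _ _ _ _ _ (Sdn t i) (Sq t j))
               (IS _ _ _ _ _ (Sdn s i) (Sdn s i)) (Ir2 _ j j).
rewrite -/X -/Kj e2 subr0 in tj.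
have t1 := T1gen (a := fun x y => Q t n x y i 0 * Q t n x y j 0) h1 erefl
   (IS _ _ _ _ _ (Sq s i) (Sq s j)) (IS _ _ _ _ _ (Sq t i) (Sq t j)) (Ir1 t) (Ir2' _).
rewrite e1.
set A := I (W s) (fun x y => Q t n x y i 0 * Q t n x y j 0) in t1 *.
set B := I (W s) (fun x y => (Q s n x y i 0 - Q t n x y i 0) * Q t n x y j 0) in tj *.
set C := I (W t) (fun x y => Q t n x y i 0 * Q t n x y j 0) in t1 *.
set M := I (W t) _ in t1 *.
set K := RI _ in t1 *.
have -> : A + B - C - h * M = (A - C - h * M) + B by ring.
apply: le_trans (ler_normD _ _) _.
have -> : (K + 2^-1 * Ki + 2^-1 * Kj) * h ^+ 2
   = h ^+ 2 * K + 2^-1 * (h ^+ 2 * Ki) + 2^-1 * h ^+ 2 * Kj by ring.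
lra.
Qed.


Lemma final n t (i j : 'I_n.+1) :
  derivable (fun s => gram (W s) (Q s n) (Q s n) i j) t 1 /\
  derive1 (fun s => gram (W s) (Q s n) (Q s n) i j) t =
   ((L1 n.+1 *m E1 t n.+1 + L2 n.+1 *m E2 t n.+1 + E1 t n *m L1 n + E2 t n *m L2 n)
     *m gram (W t) (Q t n) (Q t n)) i j.
Proof.
have [C hC] := est t i j.
have [d e] := @deriv_of_bound R (fun s => gram (W s) (Q s n) (Q s n) i j) t _ C hC.
split => //; rewrite e.
set G := gram (W t) (Q t n) (Q t n).
have -> : (L1 n.+1 *m E1 t n.+1 + L2 n.+1 *m E2 t n.+1 + E1 t n *m L1 n + E2 t n *m L2 n) *m G
  = (L1 n.+1 *m E1 t n.+1 *m G + E1 t n *m L1 n *m G)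
    + (L2 n.+1 *m E2 t n.+1 *m G + E2 t n *m L2 n *m G).
  by rewrite !mulmxDl addrACA -!addrA [X in _ + (_ + X)]addrC.
rewrite [RHS]mxE.
have Sx := S_mul (phi := fun x _ => x) (hx t) (SQ (Q t) i (ltnSn n)).
have Sx' := S_mul (phi := fun x _ => x) (hx t) (SQ (Q t) j (ltnSn n)).
have Sy := S_mul (phi := fun _ y => y) (hy t) (SQ (Q t) i (ltnSn n)).
have Sy' := S_mul (phi := fun _ y => y) (hy t) (SQ (Q t) j (ltnSn n)).
rewrite -(Mx (hM t) (phi := fun x _ => x) (hx t) i j).
rewrite -(Mx (hM t) (phi := fun _ y => y) (hy t) i j).
rewrite -I_add; [|exact: (Int_SS (hM t) Sx Sx')|exact: (Int_SS (hM t) Sy Sy')].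
by apply: I_ext => x y /=; ring.
Qed.

End Main.

Unset Implicit Arguments.

Theorem lemma6p1 (R : realType) (a40 a22 a04 : R)
  (Q : R -> forall n, R -> R -> 'cV[R]_n.+1)
  (E1 E2 : R -> forall n, 'M[R]_(n.+1, n)) :
  0 <= a40 -> 0 <= a22 -> 0 <= a04 -> 0 < a40 + a22 -> 0 < a22 + a04 ->
  (forall t, is_MOPS (Wt a40 a22 a04 t) (Q t)) ->
  (forall t n x y,
      x *: Q t n x y = L1 n.+1 *m Q t n.+1 x y + E1 t n *m Qprev (Q t) n x y) ->
  (forall t n x y,
      y *: Q t n x y = L2 n.+1 *m Q t n.+1 x y + E2 t n *m Qprev (Q t) n x y) ->
  let H := fun t n => gram (Wt a40 a22 a04 t) (Q t n) (Q t n) in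
  let V := fun t n => L1 n.+1 *m E1 t n.+1 + L2 n.+1 *m E2 t n.+1
                      + E1 t n *m L1 n + E2 t n *m L2 n in
  forall (n : nat) (t : R) (i j : 'I_n.+1),
    derivable (fun s => H s n i j) t 1 /\
    derive1 (fun s => H s n i j) t = (V t n *m H t n) i j.
Proof.
move=> _ _ _ _ _ hM hx hy H V n t i j.
exact: (final hM hx hy t i j).
Qed.
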